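(* Let $k\ge0$ and let $L$ be a language of pomsets of dimension at most $k$ all having empty source interface. If $L$ is recognizable (there exist a finite category $\mathcal D$, $K\subseteq\mathrm{Mor}(\mathcal D)$ and a functor $F:\mathrm{iiPoms}\to\mathcal D$ with $L=F^{-1}(K)$), then $L$ has a finite coherent presentation, i.e. there exist a finite $\mathrm{iiPoms}_{\le k}$-module $M$, a subset $J\subseteq M$ and a module homomorphism $\varphi:\mathrm{iiPoms}_{\le k}\to M$ with $L=\varphi^{-1}(J)$ such that for every conclist $U$ and all $P,Q\in\mathrm{iiPoms}_{\le k}(\emptyset,U)$: if $\varphi(P)=\varphi(Q)$ then $\varphi(P-A)=\varphi(Q-A)$ for all $A\subseteq U$.
   Context: Fix a finite alphabet $\Sigma$. Pomsets $(P,<,\dashrightarrow,\lambda,S,T)$: $P$ finite, $<$ a strict partial interval order, $\dashrightarrow$ acyclic relating (in one direction) distinct $<$-incomparable elements, $\lambda:P\to\Sigma$, $S$/$T$ sets of $<$-minimal/maximal elements viewed as conclists (finite totally ordered labelled sets); up to isomorphism. $\mathrm{iiPoms}$: category with objects conclists, morphisms $U\to V$ pomsets with source $U$ and target $V$, composition the gluing $P*Q$ (identify $T_P$ with $S_Q$; precedence $<_P\cup<_Q\cup(P\setminus T_P)\times(Q\setminus S_Q)$; event orders, labels united; source $S_P$, target $T_Q$), identities $\mathrm{id}_U=(U,\emptyset,\dashrightarrow,\lambda,U,U)$; $\mathrm{iiPoms}_{\le k}$: pomsets whose $<$-antichains have size $\le k$. For a pomset $P$ and $A\subseteq P$, $P-A$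 is the subpomset induced on $P\setminus A$ (restricted relations, labels and interfaces). A $\mathcal C$-module is a set $M$ with $\mathrm{src},\mathrm{tgt}:M\to\mathrm{Ob}(\mathcal C)$ and actions $M(U,V)\times\mathcal C(V,W)\to M(U,W)$ ($M(U,V)=\mathrm{src}^{-1}(U)\cap\mathrm{tgt}^{-1}(V)$), $m\cdot\alpha$, with $m\cdot\mathrm{id}=m$, $(m\cdot\alpha)\cdot\beta=m\cdot(\alpha\beta)$ (diagrammatic composition); homomorphisms preserve $\mathrm{src},\mathrm{tgt}$ and commute with the action; $\mathrm{iiPoms}_{\le k}$ is a module over itself via gluing. *)

(* Defs.v *)
From mathcomp Require Import all_boot.

Set Implicit Arguments.
Unset Strict Implicit.
Unset Printing Implicit Defensive.

Section IPomsets.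

Variable Sigma : finType.

(* Pomsets are
   considered up to isomorphism ([ipom_iso]); every notion below that lives on
   isomorphism classes is required to be invariant under [ipom_iso]. *)
Record ipomset := IPomset {
  pcar : finType;
  plt  : rel pcar;            (* precedence  <  *)
  pev  : rel pcar;            (* event order -->  *)
  plab : pcar -> Sigma;
  psrc : {set pcar};
  ptgt : {set pcar}
}.

Arguments plt : clear implicits.
Arguments pev : clear implicits.
Arguments plab : clear implicits.
Arguments psrc : clear implicits.
Arguments ptgt : clear implicits.

(* Well-formed interval ipomset (an element of Mor(iiPoms)). *)
Definition valid (P : ipomset) : Prop :=
  (forall x, ~~ plt P x x) /\
  (forall x y z, plt P x y -> plt P y z -> plt P x z) /\
  (* < is an interval order (2+2-free) *)
  (forall a b c d, plt P a b -> plt P c d -> plt P a d || plt P c b) /\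
  (forall x y, pev P x y -> [&& x != y, ~~ plt P x y & ~~ plt P y x]) /\
  (forall x y, x != y -> ~~ plt P x y -> ~~ plt P y x -> pev P x y || pev P y x) /\
  (forall x y, pev P x y -> ~~ connect (pev P) y x) /\
  (forall x, x \in psrc P -> forall y, ~~ plt P y x) /\
  (forall x, x \in ptgt P -> forall y, ~~ plt P x y).

Definition dim_le (k : nat) (P : ipomset) : Prop :=
  forall A : {set pcar P},
    (forall x y, x \in A -> y \in A -> ~~ plt P x y) -> #|A| <= k.

Definition iiPomk (k : nat) (P : ipomset) : Prop := valid P /\ dim_le k P.

Definition ipom_iso (P Q : ipomset) : Prop :=
  exists f : pcar P -> pcar Q,
    bijective f /\
    (forall x y, plt Q (f x) (f y) = plt P x y) /\
    (forall x y, pev Q (f x) (f y) = pev P x y) /\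
    (forall x, plab Q (f x) = plab P x) /\
    (forall x, (f x \in psrc Q) = (x \in psrc P)) /\
    (forall x, (f x \in ptgt Q) = (x \in ptgt P)).

(* Conclists up to isomorphism are identified with words over Sigma: the
   labels read along the (total) event order. *)
Definition evle (P : ipomset) : rel (pcar P) := fun x y => (x == y) || pev P x y.

Definition src_seq (P : ipomset) : seq (pcar P) := sort (@evle P) (enum (psrc P)).
Definition tgt_seq (P : ipomset) : seq (pcar P) := sort (@evle P) (enum (ptgt P)).

Definition src (P : ipomset) : seq Sigma := map (plab P) (src_seq P).
Definition tgt (P : ipomset) : seq Sigma := map (plab P) (tgt_seq P).

Definition idpom (w : seq Sigma) : ipomset :=
  @IPomset 'I_(size w) (fun _ _ => false) (fun i j => i < j)
           (fun i => tnth (in_tuple w) i) setT setT.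

(* R is (a representative of) the gluing P * Q: P and Q embed into R via f and
   g, T_P is identified with S_Q along an isomorphism of conclists, and the
   relations / labels / interfaces of R are as in the definition of gluing. *)
Definition glues (P Q R : ipomset) : Prop :=
  exists (f : pcar P -> pcar R) (g : pcar Q -> pcar R),
    injective f /\ injective g /\
    (forall z, (exists x, f x = z) \/ (exists y, g y = z)) /\
    (forall x y, f x = g y -> x \in ptgt P /\ y \in psrc Q) /\
    (forall x, x \in ptgt P -> exists y, f x = g y) /\
    (forall y, y \in psrc Q -> exists x, f x = g y) /\
    (forall x x' y y', f x = g y -> f x' = g y' -> pev P x x' = pev Q y y') /\
    (forall x, plab R (f x) = plab P x) /\
    (forall y, plab R (g y) = plab Q y) /\
    (forall z w, plt R z w <->
       (exists x x', [/\ f x = z, f x' = w & plt P x x']) \/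
       (exists y y', [/\ g y = z, g y' = w & plt Q y y']) \/
       (exists x y, [/\ f x = z, g y = w, x \notin ptgt P & y \notin psrc Q])) /\
    (forall z w, pev R z w <->
       (exists x x', [/\ f x = z, f x' = w & pev P x x']) \/
       (exists y y', [/\ g y = z, g y' = w & pev Q y y'])) /\
    psrc R = f @: psrc P /\
    ptgt R = g @: ptgt Q.

Definition restrict (P : ipomset) (keep : pred (pcar P)) : ipomset :=
  @IPomset {x : pcar P | keep x}
    (fun x y => plt P (val x) (val y))
    (fun x y => pev P (val x) (val y))
    (fun x => plab P (val x))
    [set x | val x \in psrc P]
    [set x | val x \in ptgt P].

(* P - A, where A is a subset of the target conclist U = tgt P, given as a set
   of positions in U (position i = i-th element of T_P along the event order). *)
Definition remove_tgt (P : ipomset) (A : pred nat) : ipomset :=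
  restrict (fun x : pcar P => ~~ ((x \in ptgt P) && A (index x (tgt_seq P)))).

End IPomsets.

(* A finite category, with composition in diagrammatic order
   (ccomp f g = "f then g"), only meaningful when ccod f = cdom g. *)
Record fincat := FinCat {
  cobj : finType;
  cmor : finType;
  cdom : cmor -> cobj;
  ccod : cmor -> cobj;
  cid  : cobj -> cmor;
  ccomp : cmor -> cmor -> cmor
}.

Definition is_category (D : fincat) : Prop :=
  (forall a : cobj D, cdom (cid a) = a /\ ccod (cid a) = a) /\
  (forall f g : cmor D, ccod f = cdom g ->
     cdom (ccomp f g) = cdom f /\ ccod (ccomp f g) = ccod g) /\
  (forall f : cmor D, ccomp (cid (cdom f)) f = f /\ ccomp f (cid (ccod f)) = f) /\
  (forall f g h : cmor D, ccod f = cdom g -> ccod g = cdom h ->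
     ccomp (ccomp f g) h = ccomp f (ccomp g h)).

Definition is_functor (Sigma : finType) (D : fincat)
    (Fo : seq Sigma -> cobj D) (Fm : ipomset Sigma -> cmor D) : Prop :=
  (forall P Q, valid P -> ipom_iso P Q -> Fm P = Fm Q) /\
  (forall P, valid P -> cdom (Fm P) = Fo (src P) /\ ccod (Fm P) = Fo (tgt P)) /\
  (forall w, Fm (idpom w) = cid (Fo w)) /\
  (forall P Q R, valid P -> valid Q -> tgt P = src Q -> glues P Q R ->
     Fm R = ccomp (Fm P) (Fm Q)).

Definition recognizable (Sigma : finType) (L : ipomset Sigma -> Prop) : Prop :=
  exists (D : fincat) (K : pred (cmor D))
         (Fo : seq Sigma -> cobj D) (Fm : ipomset Sigma -> cmor D),
    is_category D /\ is_functor Fo Fm /\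
    (forall P, valid P -> (L P <-> Fm P \in K)).

(* A finite iiPoms_{<=k}-module: a finite set M with src/tgt maps to objects
   (conclists = words) and a right action m . alpha defined when
   tgt m = src alpha. *)
Record finmodule (Sigma : finType) := FinModule {
  mcar : finType;
  msrc : mcar -> seq Sigma;
  mtgt : mcar -> seq Sigma;
  mact : mcar -> ipomset Sigma -> mcar
}.

Definition is_module (Sigma : finType) (k : nat) (M : finmodule Sigma) : Prop :=
  (forall (m : mcar M) (a b : ipomset Sigma), iiPomk k a -> mtgt m = src a -> ipom_iso a b ->
     mact m a = mact m b) /\
  (forall (m : mcar M) (a : ipomset Sigma), iiPomk k a -> mtgt m = src a ->
     msrc (mact m a) = msrc m /\ mtgt (mact m a) = tgt a) /\
  (forall m : mcar M, mact m (idpom (mtgt m)) = m) /\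
  (forall (m : mcar M) (a b r : ipomset Sigma), iiPomk k a -> iiPomk k b -> mtgt m = src a -> tgt a = src b ->
     glues a b r -> mact (mact m a) b = mact m r).

Definition is_module_hom (Sigma : finType) (k : nat) (M : finmodule Sigma)
    (phi : ipomset Sigma -> mcar M) : Prop :=
  (forall P Q, iiPomk k P -> ipom_iso P Q -> phi P = phi Q) /\
  (forall P, iiPomk k P -> msrc (phi P) = src P /\ mtgt (phi P) = tgt P) /\
  (forall P a R, iiPomk k P -> iiPomk k a -> tgt P = src a -> glues P a R ->
     phi R = mact (phi P) a).

Arguments is_module {Sigma} k M.
Arguments is_module_hom {Sigma} k M phi.
Arguments iiPomk {Sigma} k P.
Arguments dim_le {Sigma} k P.

(* Main.v *)
Require Import Defs.
From mathcomp Require Import all_boot.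
From Stdlib Require Import FunctionalExtensionality.
Set Implicit Arguments.
Unset Strict Implicit.
Unset Printing Implicit Defensive.

Section Gen.
Variable Sigma : finType.
Implicit Types P Q R : ipomset Sigma.
Local Notation evl P := (@evle _ P).
Local Notation pv P := (@pev _ P).
Local Notation pl P := (@plt _ P).
Local Notation plb P := (@plab _ P).
Local Notation rs P kp := (@restrict _ P kp).

Definition good P (Z : {set pcar P}) :=
  [/\ {in Z &, total (evl P)}, {in Z & &, transitive (evl P)} &
      {in Z &, antisymmetric (evl P)}].
Arguments good : clear implicits.

Lemma pev_asym P x y : valid P -> pv P x y -> pv P y x -> False.
Proof.
case=> _ [_ [_ [_ [_ [acyc _]]]]] pxy pyx.
by move: (acyc _ _ pxy); rewrite (connect1 pyx).
Qed.

Lemma antichain_good P (Z : {set pcar P}) : valid P ->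
  (forall x y, x \in Z -> y \in Z -> ~~ pl P x y) -> good P Z.
Proof.
move=> V H; have V' := V.
case: V' => _ [_ [_ [evok [evtot [acyc _]]]]].
split.
- move=> x y xZ yZ; rewrite /evle /=; case: (eqVneq x y) => [->//|nxy] /=.
  exact: (evtot x y nxy (H x y xZ yZ) (H y x yZ xZ)).
- move=> y x z yZ xZ zZ; rewrite /evle /= => /orP[/eqP->//|pxy] /orP[/eqP<-|pyz].
    by rewrite pxy orbT.
  case: (eqVneq x z) => [//|nxz] /=.
  case/orP: (evtot x z nxz (H x z xZ zZ) (H z x zZ xZ)) => // pzx.
  move: (acyc _ _ pxy).
  by rewrite (connect_trans (connect1 pyz) (connect1 pzx)).
- move=> x y xZ yZ /andP[]; rewrite /evle /= => /orP[/eqP//|pxy] /orP[/eqP//|pyx].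
  by case: (pev_asym V pxy pyx).
Qed.

Lemma good_T P : valid P -> good P (ptgt P).
Proof.
move=> V; apply: antichain_good => // x y xT _.
by case: V => _ [_ [_ [_ [_ [_ [_ H]]]]]]; apply: H.
Qed.

Lemma good_S P : valid P -> good P (psrc P).
Proof.
move=> V; apply: antichain_good => // x y _ yS.
by case: V => _ [_ [_ [_ [_ [_ [H _]]]]]]; apply: H.
Qed.

Lemma good_sub P (Z Z' : {set pcar P}) : good P Z' -> {subset Z <= Z'} -> good P Z.
Proof.
case=> tot tr anti sub; split.
- by move=> x y /sub xZ /sub yZ; apply: tot.
- by move=> y x z /sub yZ /sub xZ /sub zZ; apply: tr.
- by move=> x y /sub xZ /sub yZ; apply: anti.
Qed.

Lemma sort_char P (Z : {set pcar P}) s : good P Z -> uniq s -> s =i Z ->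
  sorted (evl P) s -> sort (evl P) (enum Z) = s.
Proof.
case=> tot tr anti us sZ ss.
have mS x : (x \in sort (evl P) (enum Z)) = (x \in Z) by rewrite mem_sort mem_enum.
apply: sorted_eq_in.
- by move=> y x z; rewrite !mS; apply: tr.
- by move=> x y; rewrite !mS; apply: anti.
- by apply: (@sort_sorted_in _ (mem Z)) => //; apply/allP => x; rewrite mem_enum.
- exact: ss.
- apply: uniq_perm; first by rewrite sort_uniq enum_uniq.
    done.
  by move=> x; rewrite mS sZ.
Qed.

Definition emb P R (h : pcar P -> pcar R) :=
  injective h /\ forall x y, pv R (h x) (h y) = pv P x y.

Lemma emb_evle P R (h : pcar P -> pcar R) : emb h ->
  forall x y, evl R (h x) (h y) = evl P x y.
Proof. by case=> inj hp x y; rewrite /evle /= (inj_eq inj) hp. Qed.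

Lemma good_push P R (h : pcar P -> pcar R) (ZP : {set pcar P}) (ZR : {set pcar R}) : emb h -> good P ZP ->
  (forall z, z \in ZR -> exists2 x, x \in ZP & h x = z) -> good R ZR.
Proof.
move=> E [tot tr anti] HZ; split.
- by move=> z w /HZ[x xZ <-] /HZ[y yZ <-]; rewrite !(emb_evle E); apply: tot.
- move=> w z u /HZ[y yZ <-] /HZ[x xZ <-] /HZ[v vZ <-]; rewrite !(emb_evle E).
  exact: tr.
- move=> z w /HZ[x xZ <-] /HZ[y yZ <-]; rewrite !(emb_evle E) => H.
  by rewrite (anti x y xZ yZ H).
Qed.

Lemma good_pull P R (h : pcar P -> pcar R) (ZP : {set pcar P}) (ZR : {set pcar R}) : emb h -> good R ZR ->
  (forall x, x \in ZP -> h x \in ZR) -> good P ZP.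
Proof.
move=> E [tot tr anti] HZ; split.
- by move=> x y /HZ xZ /HZ yZ; rewrite -!(emb_evle E); apply: tot.
- by move=> y x z /HZ yZ /HZ xZ /HZ zZ; rewrite -!(emb_evle E); apply: tr.
- move=> x y /HZ xZ /HZ yZ; rewrite -!(emb_evle E) => H.
  by case: E => inj _; apply: inj; apply: anti.
Qed.

Lemma sort_emb P R (h : pcar P -> pcar R) (ZP : {set pcar P}) (ZR : {set pcar R}) : emb h -> good P ZP -> good R ZR ->
  (forall z, z \in ZR <-> exists2 x, x \in ZP & h x = z) ->
  sort (evl R) (enum ZR) = map h (sort (evl P) (enum ZP)).
Proof.
move=> E GP GR HZ; apply: sort_char => //.
- by case: E => inj _; rewrite (map_inj_uniq inj) sort_uniq enum_uniq.
- move=> z; apply/idP/idP => [/mapP[x]|/HZ[x xZ <-]].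
    by rewrite mem_sort mem_enum => xZ ->; apply/HZ; exists x.
  by apply: map_f; rewrite mem_sort mem_enum.
- rewrite sorted_map (eq_sorted (emb_evle E)).
  by case: GP => tot _ _; apply: (@sort_sorted_in _ (mem ZP)) => //; apply/allP => x; rewrite mem_enum.
Qed.


Lemma imset_iff (aT rT : finType) (f : aT -> rT) (D : {set aT}) z :
  z \in f @: D <-> exists2 x, x \in D & f x = z.
Proof. by split => [/imsetP[x xD ->]|[x xD <-]]; [exists x | apply: imset_f]. Qed.

Lemma valid_restrict P (kp : pred (pcar P)) : valid P -> valid (rs P kp).
Proof.
case=> irr [tr [intv [evok [evtot [acyc [smin tmax]]]]]].
split; [|split; [|split; [|split; [|split; [|split; [|split]]]]]] => /=.
- by move=> x; apply: irr.
- by move=> x y z; apply: tr.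
- by move=> a b c d; apply: intv.
- by move=> x y /evok; rewrite -(inj_eq val_inj).
- by move=> x y; rewrite -(inj_eq val_inj); apply: evtot.
- move=> x y /acyc; apply: contra => /connectP[p pp ->]; apply/connectP.
  by exists (map val p); [rewrite path_map | rewrite last_map].
- by move=> x; rewrite inE => /smin H y; apply: H.
- by move=> x; rewrite inE => /tmax H y; apply: H.
Qed.

Lemma dim_restrict k P (kp : pred (pcar P)) : dim_le k P -> dim_le k (rs P kp).
Proof.
move=> D A HA; rewrite -(card_imset _ val_inj); apply: D.
by move=> x y /imsetP[x' x'A ->] /imsetP[y' y'A ->]; apply: HA.
Qed.

Lemma iiPomk_restrict k P (kp : pred (pcar P)) : iiPomk k P -> iiPomk k (rs P kp).
Proof. by case=> V D; split; [apply: valid_restrict | apply: dim_restrict]. Qed.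

Lemma emb_val P (kp : pred (pcar P)) : emb (val : pcar (rs P kp) -> pcar P).
Proof. by split => //; apply: val_inj. Qed.

Lemma sort_restrict P (kp : pred (pcar P)) (Z' : {set pcar (rs P kp)}) (Z : {set pcar P}) :
  good P Z -> (forall x, (x \in Z') = (val x \in Z)) ->
  map val (sort (evl (rs P kp)) (enum Z')) = filter kp (sort (evl P) (enum Z)).
Proof.
move=> G HZ.
set Z2 := [set x in Z | kp x].
have G2 : good P Z2 by apply: (@good_sub P Z2 Z G) => x; rewrite inE => /andP[].
have G' : good (rs P kp) Z'.
  by apply: (@good_pull (rs P kp) P val Z' Z (@emb_val P kp) G) => x; rewrite HZ.
have -> : map val (sort (evl (rs P kp)) (enum Z')) = sort (evl P) (enum Z2).
  symmetry; refine (@sort_emb (rs P kp) P val Z' Z2 (@emb_val P kp) G' G2 _) => z; rewrite inE; split.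
    by case/andP=> zZ kz; exists (exist _ z kz) => //; rewrite HZ.
  by case=> x xZ <-; rewrite -HZ xZ (valP x).
case: G => tot tr anti.
apply: sort_char => //.
- by rewrite filter_uniq // sort_uniq enum_uniq.
- by move=> x; rewrite mem_filter mem_sort mem_enum inE andbC.
- apply: (@sorted_filter_in _ (mem Z) _ tr); first by apply/allP => x; rewrite mem_sort mem_enum.
  by apply: (@sort_sorted_in _ (mem Z)) => //; apply/allP => x; rewrite mem_enum.
Qed.

Lemma tgt_seq_rs P (kp : pred (pcar P)) : valid P ->
  map val (tgt_seq (rs P kp)) = filter kp (tgt_seq P).
Proof. by move=> V; apply: (sort_restrict (good_T V)) => x; rewrite inE. Qed.

Lemma src_seq_rs P (kp : pred (pcar P)) : valid P ->
  map val (src_seq (rs P kp)) = filter kp (src_seq P).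
Proof. by move=> V; apply: (sort_restrict (good_S V)) => x; rewrite inE. Qed.

Lemma tgt_rs P (kp : pred (pcar P)) : valid P ->
  tgt (rs P kp) = map (plb P) (filter kp (tgt_seq P)).
Proof. by move=> V; rewrite -(tgt_seq_rs kp V) -map_comp. Qed.

Lemma src_rs P (kp : pred (pcar P)) : valid P ->
  src (rs P kp) = map (plb P) (filter kp (src_seq P)).
Proof. by move=> V; rewrite -(src_seq_rs kp V) -map_comp. Qed.

Lemma path_ord_le n (p : seq 'I_n) (y : 'I_n) :
  path (fun i j : 'I_n => i < j) y p -> y <= last y p.
Proof.
elim: p y => //= z p IH y /andP[yz /IH]; apply: leq_trans; exact: ltnW.
Qed.

Lemma valid_idpom (w : seq Sigma) : valid (idpom w).
Proof.
split; [|split; [|split; [|split; [|split; [|split; [|split]]]]]] => //=.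
- move=> x y lt; rewrite andbT; apply/eqP => e; by rewrite e ltnn in lt.
- move=> x y nxy _ _; by rewrite -neq_ltn.
- move=> x y lt; apply/negP => /connectP[p /path_ord_le pp ex].
  by rewrite -ex in pp; move: (leq_trans lt pp); rewrite ltnn.
Qed.

Lemma enum_ord_sorted (w : seq Sigma) :
  sorted (evl (idpom w)) (enum 'I_(size w)).
Proof.
have : sorted ltn (map val (enum 'I_(size w))) by rewrite val_enum_ord iota_ltn_sorted.
rewrite sorted_map; apply: sub_sorted => i j /= lt; by rewrite /evle /= lt orbT.
Qed.

Lemma tgt_seq_idpom (w : seq Sigma) : tgt_seq (idpom w) = enum 'I_(size w).
Proof.
apply: (sort_char (good_T (valid_idpom w))).
- exact: enum_uniq.
- by move=> x; rewrite mem_enum /= !inE.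
- exact: enum_ord_sorted.
Qed.

Lemma src_seq_idpom (w : seq Sigma) : src_seq (idpom w) = enum 'I_(size w).
Proof.
apply: (sort_char (good_S (valid_idpom w))).
- exact: enum_uniq.
- by move=> x; rewrite mem_enum /= !inE.
- exact: enum_ord_sorted.
Qed.

Lemma tgt_idpom (w : seq Sigma) : tgt (idpom w) = w.
Proof. by rewrite /tgt tgt_seq_idpom; apply: (map_tnth_enum (in_tuple w)). Qed.

Lemma src_idpom (w : seq Sigma) : src (idpom w) = w.
Proof. by rewrite /src src_seq_idpom; apply: (map_tnth_enum (in_tuple w)). Qed.

Definition gm P Q R (f : pcar P -> pcar R) (g : pcar Q -> pcar R) :=
    injective f /\ injective g /\
    (forall z, (exists x, f x = z) \/ (exists y, g y = z)) /\
    (forall x y, f x = g y -> x \in ptgt P /\ y \in psrc Q) /\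
    (forall x, x \in ptgt P -> exists y, f x = g y) /\
    (forall y, y \in psrc Q -> exists x, f x = g y) /\
    (forall x x' y y', f x = g y -> f x' = g y' -> pv P x x' = pv Q y y') /\
    (forall x, plb R (f x) = plb P x) /\
    (forall y, plb R (g y) = plb Q y) /\
    (forall z w, pl R z w <->
       (exists x x', [/\ f x = z, f x' = w & pl P x x']) \/
       (exists y y', [/\ g y = z, g y' = w & pl Q y y']) \/
       (exists x y, [/\ f x = z, g y = w, x \notin ptgt P & y \notin psrc Q])) /\
    (forall z w, pv R z w <->
       (exists x x', [/\ f x = z, f x' = w & pv P x x']) \/
       (exists y y', [/\ g y = z, g y' = w & pv Q y y'])) /\
    psrc R = f @: psrc P /\
    ptgt R = g @: ptgt Q.

Lemma gluesE P Q R : glues P Q R <-> exists f g, @gm P Q R f g.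
Proof. by []. Qed.

Section GM.
Variables (P Q R : ipomset Sigma) (f : pcar P -> pcar R) (g : pcar Q -> pcar R).
Hypothesis G : gm f g.

Lemma gm_emb_f : emb f.
Proof.
case: G => finj [ginj [cover [fg [tP [sQ [comp [labf [labg [ltiff [eviff [srcR tgtR]]]]]]]]]]].
split => // x x'; apply/idP/idP.
- case/eviff => [[x1 [x1' [e1 e2 p]]]|[y [y' [e1 e2 p]]]].
    by rewrite -(finj _ _ e1) -(finj _ _ e2).
  by rewrite (comp x x' y y' (esym e1) (esym e2)).
- by move=> p; apply/eviff; left; exists x, x'.
Qed.

Lemma gm_emb_g : emb g.
Proof.
case: G => finj [ginj [cover [fg [tP [sQ [comp [labf [labg [ltiff [eviff [srcR tgtR]]]]]]]]]]].
split => // y y'; apply/idP/idP.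
- case/eviff => [[x [x' [e1 e2 p]]]|[y1 [y1' [e1 e2 p]]]].
    by rewrite -(comp x x' y y' e1 e2).
  by rewrite -(ginj _ _ e1) -(ginj _ _ e2).
- by move=> p; apply/eviff; right; exists y, y'.
Qed.

Hypotheses (VP : valid P) (VQ : valid Q).

Lemma gm_src_seq : src_seq R = map f (src_seq P).
Proof.
have G' := G.
case: G' => finj [ginj [cover [fg [tP [sQ [comp [labf [labg [ltiff [eviff [srcR tgtR]]]]]]]]]]].
rewrite /src_seq srcR.
have GR : good R (f @: psrc P).
  by apply: (good_push gm_emb_f (good_S VP)) => z /imset_iff.
by apply: (sort_emb gm_emb_f (good_S VP) GR) => z; apply: imset_iff.
Qed.

Lemma gm_tgt_seq : tgt_seq R = map g (tgt_seq Q).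
Proof.
have G' := G.
case: G' => finj [ginj [cover [fg [tP [sQ [comp [labf [labg [ltiff [eviff [srcR tgtR]]]]]]]]]]].
rewrite /tgt_seq tgtR.
have GR : good R (g @: ptgt Q).
  by apply: (good_push gm_emb_g (good_T VQ)) => z /imset_iff.
by apply: (sort_emb gm_emb_g (good_T VQ) GR) => z; apply: imset_iff.
Qed.

Lemma gm_mid_seq : map f (tgt_seq P) = map g (src_seq Q).
Proof.
have G' := G.
case: G' => finj [ginj [cover [fg [tP [sQ [comp [labf [labg [ltiff [eviff [srcR tgtR]]]]]]]]]]].
have GR : good R (f @: ptgt P).
  by apply: (good_push gm_emb_f (good_T VP)) => z /imset_iff.
rewrite -(sort_emb gm_emb_f (good_T VP) GR (fun z => imset_iff f (ptgt P) z)).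
apply: (sort_emb gm_emb_g (good_S VQ) GR) => z; split.
- case/imsetP => x xT ->; case: (tP x xT) => y e; exists y => //.
  by case: (fg _ _ e).
- case=> y yS <-; case: (sQ y yS) => x e; rewrite -e; apply: imset_f.
  by case: (fg _ _ e).
Qed.

Lemma gm_mid : tgt P = src Q.
Proof.
have G' := G.
case: G' => finj [ginj [cover [fg [tP [sQ [comp [labf [labg [ltiff [eviff [srcR tgtR]]]]]]]]]]].
rewrite /tgt /src.
transitivity (map (plb R) (map f (tgt_seq P))).
  by rewrite -map_comp; apply: eq_map => x; rewrite /= labf.
by rewrite gm_mid_seq -map_comp; apply: eq_map => y; rewrite /= labg.
Qed.

Lemma gm_src : src R = src P.
Proof.
have G' := G.
case: G' => finj [ginj [cover [fg [tP [sQ [comp [labf [labg [ltiff [eviff [srcR tgtR]]]]]]]]]]].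
by rewrite /src gm_src_seq -map_comp; apply: eq_map => x; rewrite /= labf.
Qed.

Lemma gm_tgt : tgt R = tgt Q.
Proof.
have G' := G.
case: G' => finj [ginj [cover [fg [tP [sQ [comp [labf [labg [ltiff [eviff [srcR tgtR]]]]]]]]]]].
by rewrite /tgt gm_tgt_seq -map_comp; apply: eq_map => x; rewrite /= labg.
Qed.

End GM.

Lemma keep_eq (T : Type) (kr : pred T) (z : {z | kr z}) a : a = val z -> kr a.
Proof. by move=> ->; apply: (valP z). Qed.

Lemma gm_rs P Q R (f : pcar P -> pcar R) (g : pcar Q -> pcar R) (kr : pred (pcar R)) :
  gm f g ->
  @gm (rs P (fun x => kr (f x))) (rs Q (fun y => kr (g y))) (rs R kr)
     (fun x => exist _ (f (val x)) (valP x)) (fun y => exist _ (g (val y)) (valP y)).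
Proof.
case=> finj [ginj [cover [fg [tP [sQ [comp [labf [labg [ltiff [eviff [srcR tgtR]]]]]]]]]]].
split; [|split; [|split; [|split; [|split; [|split; [|split; [|split; [|split; [|split; [|split; [|split]]]]]]]]]]].
- by move=> x y /(congr1 val) /= /finj /val_inj.
- by move=> x y /(congr1 val) /= /ginj /val_inj.
- move=> z; case: (cover (val z)) => [[x ex]|[y ey]].
    by left; exists (exist _ x (keep_eq ex)); apply: val_inj.
  by right; exists (exist _ y (keep_eq ey)); apply: val_inj.
- by move=> x y /(congr1 val) /= /fg [h1 h2]; rewrite !inE.
- move=> x; rewrite inE => /tP[y ey].
  have ky : kr (g y) by rewrite -ey; apply: (valP x).
  by exists (exist _ y ky); apply: val_inj.
- move=> y; rewrite inE => /sQ[x ex].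
  have kx : kr (f x) by rewrite ex; apply: (valP y).
  by exists (exist _ x kx); apply: val_inj.
- by move=> x x' y y' /(congr1 val) /= e1 /(congr1 val) /= e2; apply: comp.
- by move=> x; apply: labf.
- by move=> y; apply: labg.
- move=> z w /=; split.
  + move/ltiff; case=> [[x [x' [e1 e2 p]]]|[[y [y' [e1 e2 p]]]|[x [y [e1 e2 nx ny]]]]].
    * left; exists (exist _ x (keep_eq e1)), (exist _ x' (keep_eq e2)).
      by split => //; apply: val_inj.
    * right; left; exists (exist _ y (keep_eq e1)), (exist _ y' (keep_eq e2)).
      by split => //; apply: val_inj.
    * right; right; exists (exist _ x (keep_eq e1)), (exist _ y (keep_eq e2)).
      by split => //; [apply: val_inj | apply: val_inj | rewrite inE | rewrite inE].
  + move=> H; apply/ltiff; move: H.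
    case=> [[x [x' [<- <- p]]]|[[y [y' [<- <- p]]]|[x [y [<- <- nx ny]]]]] /=.
    * by left; exists (val x), (val x').
    * by right; left; exists (val y), (val y').
    * by right; right; exists (val x), (val y); rewrite !inE in nx ny.
- move=> z w /=; split.
  + move/eviff; case=> [[x [x' [e1 e2 p]]]|[y [y' [e1 e2 p]]]].
    * left; exists (exist _ x (keep_eq e1)), (exist _ x' (keep_eq e2)).
      by split => //; apply: val_inj.
    * right; exists (exist _ y (keep_eq e1)), (exist _ y' (keep_eq e2)).
      by split => //; apply: val_inj.
  + move=> H; apply/eviff; move: H.
    case=> [[x [x' [<- <- p]]]|[y [y' [<- <- p]]]] /=.
    * by left; exists (val x), (val x').
    * by right; exists (val y), (val y').
- apply/setP => z; rewrite inE /= srcR; apply/imsetP/imsetP.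
    case=> x xS e; exists (exist _ x (keep_eq (esym e))); first by rewrite inE.
    by apply: val_inj.
  by case=> x; rewrite inE => xS ->; exists (val x).
- apply/setP => z; rewrite inE /= tgtR; apply/imsetP/imsetP.
    case=> y yT e; exists (exist _ y (keep_eq (esym e))); first by rewrite inE.
    by apply: val_inj.
  by case=> y; rewrite inE => yT ->; exists (val y).
Qed.

Definition isom P Q (f : pcar P -> pcar Q) :=
    bijective f /\
    (forall x y, pl Q (f x) (f y) = pl P x y) /\
    (forall x y, pv Q (f x) (f y) = pv P x y) /\
    (forall x, plb Q (f x) = plb P x) /\
    (forall x, (f x \in psrc Q) = (x \in psrc P)) /\
    (forall x, (f x \in ptgt Q) = (x \in ptgt P)).

Lemma isoE P Q : ipom_iso P Q <-> exists f, @isom P Q f.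
Proof. by []. Qed.

Lemma isom_seqs P Q (f : pcar P -> pcar Q) : valid P -> isom f ->
  src_seq Q = map f (src_seq P) /\ tgt_seq Q = map f (tgt_seq P).
Proof.
move=> V [bij [hlt [hev [hlab [hs ht]]]]].
have E : emb f by split => //; apply: bij_inj.
case: bij => finv fK gK.
have HS z : z \in psrc Q <-> exists2 x, x \in psrc P & f x = z.
  split => [zS|[x xS <-]]; last by rewrite hs.
  by exists (finv z); rewrite ?gK // -hs gK.
have HT z : z \in ptgt Q <-> exists2 x, x \in ptgt P & f x = z.
  split => [zS|[x xS <-]]; last by rewrite ht.
  by exists (finv z); rewrite ?gK // -ht gK.
split.
- apply: (sort_emb E (good_S V)) => //.
  by apply: (good_push E (good_S V)) => z /HS.
- apply: (sort_emb E (good_T V)) => //.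
  by apply: (good_push E (good_T V)) => z /HT.
Qed.

Lemma isom_words P Q (f : pcar P -> pcar Q) : valid P -> isom f ->
  src Q = src P /\ tgt Q = tgt P.
Proof.
move=> V I; have [e1 e2] := isom_seqs V I.
case: I => _ [_ [_ [hlab _]]].
rewrite /src /tgt e1 e2 -!map_comp.
by split; apply: eq_map => x; rewrite /= hlab.
Qed.

Lemma isom_rs P Q (f : pcar P -> pcar Q) (kp : pred (pcar P)) (kq : pred (pcar Q)) :
  isom f -> (forall x, kq (f x) = kp x) -> ipom_iso (rs P kp) (rs Q kq).
Proof.
move=> [bij [hlt [hev [hlab [hs ht]]]]] H.
case: bij => finv fK gK.
have kf (x : pcar (rs P kp)) : kq (f (val x)) by rewrite H; apply: (valP x).
have kg (y : pcar (rs Q kq)) : kp (finv (val y)) by rewrite -H gK; apply: (valP y).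
exists (fun x => exist _ (f (val x)) (kf x)).
split; [|split; [|split; [|split; [|split]]]] => /=.
- exists (fun y => exist _ (finv (val y)) (kg y)) => x; apply: val_inj => /=; [exact: fK | exact: gK].
- by move=> x y; apply: hlt.
- by move=> x y; apply: hev.
- by move=> x; apply: hlab.
- by move=> x; rewrite !inE /=; apply: hs.
- by move=> x; rewrite !inE /=; apply: ht.
Qed.

Lemma rs_all_iso P (kp : pred (pcar P)) : (forall x, kp x) -> ipom_iso (rs P kp) P.
Proof.
move=> H; exists val.
split; [|split; [|split; [|split; [|split]]]] => //=.
- by exists (fun x => exist _ x (H x)) => x //; apply: val_inj.
- by move=> x; rewrite inE.
- by move=> x; rewrite inE.
Qed.

Lemma rs_rs_iso P (k1 : pred (pcar P)) (k2 : pred (pcar (rs P k1))) (k3 : pred (pcar P)) :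
  (forall x (h : k1 x), k2 (exist _ x h) = k3 x) -> (forall x, k3 x -> k1 x) ->
  ipom_iso (rs (rs P k1) k2) (rs P k3).
Proof.
move=> H H2.
have e (v : pcar (rs P k1)) : k2 v = k3 (val v) by case: v => x h; apply: H.
have kf (x : pcar (rs (rs P k1) k2)) : k3 (val (val x)) by rewrite -e; apply: (valP x).
have kg1 (y : pcar (rs P k3)) : k1 (val y) by apply: H2; apply: (valP y).
have kg (y : pcar (rs P k3)) : k2 (exist _ (val y) (kg1 y)) by rewrite H; apply: (valP y).
exists (fun x => exist _ (val (val x)) (kf x)).
split; [|split; [|split; [|split; [|split]]]] => /=.
- exists (fun y => exist _ (exist _ (val y) (kg1 y)) (kg y)).
    by move=> x; apply: val_inj; apply: val_inj.
  by move=> y; apply: val_inj.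
- by [].
- by [].
- by [].
- by move=> x; rewrite !inE.
- by move=> x; rewrite !inE.
Qed.

Lemma index_ltn_mono n (s : seq 'I_n) : sorted (fun i j : 'I_n => i < j) s ->
  {in s &, forall a b, (index a s < index b s) = (a < b)}.
Proof.
move=> st a b aS bS.
have tr : transitive (fun i j : 'I_n => i < j) by move=> ? ? ?; apply: ltn_trans.
apply/idP/idP => [|ab]; first exact: (sorted_ltn_index tr st a b aS bS).
rewrite ltnNge leq_eqVlt; apply/negP => /orP[/eqP e|lt].
  have eab : b = a by apply: (index_inj a bS aS e).
  by move: ab; rewrite eab ltnn.
by move: ab; rewrite ltnNge (ltnW (sorted_ltn_index tr st b a bS aS lt)).
Qed.

Lemma rs_idpom_iso (w : seq Sigma) (kp : pred 'I_(size w)) :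
  ipom_iso (rs (idpom w) kp) (idpom (mask (map kp (enum 'I_(size w))) w)).
Proof.
set n := size w; set s := filter kp (enum 'I_n).
set w' := mask _ w.
have ew' : w' = map (tnth (in_tuple w)) s.
  by rewrite /s filter_mask map_mask map_tnth_enum.
have sz : size w' = size s by rewrite ew' size_map.
have us : uniq s by rewrite filter_uniq // enum_uniq.
have ms x : (x \in s) = kp x by rewrite mem_filter mem_enum andbT.
have hlt (x : pcar (rs (idpom w) kp)) : index (val x) s < size w'.
  by rewrite sz index_mem ms; apply: (valP x).
have st : sorted (fun i j : 'I_n => i < j) s.
  have : sorted ltn (map val (enum 'I_n)) by rewrite val_enum_ord iota_ltn_sorted.
  rewrite sorted_map => se; apply: sorted_filter => //.
  by move=> ? ? ?; apply: ltn_trans.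
exists (fun x => Ordinal (hlt x)).
split; [|split; [|split; [|split; [|split]]]].
- apply: inj_card_bij.
    move=> x y /(congr1 val) /= e; apply: val_inj.
    by apply: (index_inj (val x) _ _ e); rewrite ms; apply: valP.
  have cs : #|s| = size s by apply/card_uniqP.
  rewrite card_ord sz -cs card_sig; apply/eq_leq/eq_card => x.
  by rewrite !inE ms.
- by [].
- move=> x y /=; apply: index_ltn_mono => //; rewrite ms; apply: valP.
- move=> x /=; rewrite (tnth_nth (tnth (in_tuple w) (val x))) /=.
  rewrite ew' (nth_map (val x)); last by rewrite index_mem ms; apply: valP.
  by rewrite nth_index // ms; apply: valP.
- by move=> x; rewrite !inE.
- by move=> x; rewrite !inE.
Qed.

Lemma rs_ext P (k1 k2 : pred (pcar P)) : k1 =1 k2 -> rs P k1 = rs P k2.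
Proof. by move=> H; rewrite (functional_extensionality k1 k2 H). Qed.

Lemma map_index_iota (T : eqType) (s : seq T) : uniq s -> map (index^~ s) s = iota 0 (size s).
Proof.
case: s => [//|x0 s'] us.
apply: (@eq_from_nth _ 0); first by rewrite size_map size_iota.
move=> i; rewrite size_map => lt.
by rewrite (nth_map x0) // nth_iota // add0n index_uniq.
Qed.

Lemma filter_pos (T : eqType) (s : seq T) (p : pred nat) : uniq s ->
  filter (fun x => p (index x s)) s = mask (map p (iota 0 (size s))) s.
Proof.
by move=> us; rewrite filter_mask -(map_index_iota us) -map_comp.
Qed.

Definition filterpos (A : pred nat) (w : seq Sigma) :=
  mask (map (fun i => ~~ A i) (iota 0 (size w))) w.

Lemma uniq_tgt_seq P : uniq (tgt_seq P).
Proof. by rewrite sort_uniq enum_uniq. Qed.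
Lemma uniq_src_seq P : uniq (src_seq P).
Proof. by rewrite sort_uniq enum_uniq. Qed.
Lemma mem_tgt_seq P x : (x \in tgt_seq P) = (x \in ptgt P).
Proof. by rewrite mem_sort mem_enum. Qed.
Lemma mem_src_seq P x : (x \in src_seq P) = (x \in psrc P).
Proof. by rewrite mem_sort mem_enum. Qed.

Lemma tgt_remove P (A : pred nat) : valid P ->
  tgt (remove_tgt P A) = filterpos A (tgt P).
Proof.
move=> V; rewrite tgt_rs //.
rewrite (@eq_in_filter _ _ (fun x => ~~ A (index x (tgt_seq P)))); last first.
  by move=> x; rewrite mem_tgt_seq => ->.
rewrite (@filter_pos _ _ (fun n => ~~ A n)) ?uniq_tgt_seq // map_mask /filterpos /tgt size_map.
by [].
Qed.

Lemma index_filter_count (T : eqType) (s : seq T) (p : pred T) x :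
  x \in s -> p x -> index x (filter p s) = count p (take (index x s) s).
Proof.
elim: s => [//|y s IH]; rewrite in_cons => /orP[/eqP ->|xs] px /=.
  by rewrite px /= eqxx.
case: (eqVneq y x) => [-> /=|nyx]; first by rewrite px /= eqxx.
case py: (p y) => /=; first by rewrite (negbTE nyx) IH // py.
by rewrite IH // py.
Qed.

Lemma count_take_pos (T : eqType) (s : seq T) (p : pred nat) n : uniq s -> n <= size s ->
  count (fun x => p (index x s)) (take n s) = count p (iota 0 n).
Proof.
move=> us le.
have -> : count (fun x => p (index x s)) (take n s) = count p (map (index^~ s) (take n s)).
  by rewrite count_map.
by rewrite map_take (map_index_iota us) take_iota (minn_idPl le).
Qed.

Section Main.
Variables (k : nat) (D : fincat) (Fo : seq Sigma -> cobj D) (Fm : ipomset Sigma -> cmor D).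
Hypotheses (HD : is_category D) (HF : is_functor Fo Fm).

Definition natset (A : {set 'I_k}) : pred nat := fun n => [exists i in A, val i == n].

Lemma natsetP (A : {set 'I_k}) n : reflect (exists2 i : 'I_k, i \in A & val i = n) (natset A n).
Proof.
apply: (iffP existsP) => [[i /andP[iA /eqP e]]|[i iA e]]; first by exists i.
by exists i; rewrite iA e eqxx.
Qed.

Lemma natsetI (A : {set 'I_k}) m n : natset (A :&: [set i : 'I_k | i < m]) n = natset A n && (n < m).
Proof.
apply/natsetP/andP => [[i]|[/natsetP[i iA <-] lt]].
  by rewrite !inE => /andP[iA lt] <-; split => //; apply/natsetP; exists i.
by exists i => //; rewrite !inE iA lt.
Qed.

Lemma natset0 n : natset set0 n = false.
Proof. by apply/natsetP => [[i]]; rewrite inE. Qed.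

Definition Xp P (B : {set 'I_k}) : pred (pcar P) :=
  fun y => (y \in ptgt P) && natset B (index y (tgt_seq P)).
Arguments Xp : clear implicits.

Definition Aset P (B : {set 'I_k}) : {set 'I_k} :=
  [set i : 'I_k | val i \in [seq index y (src_seq P) | y <- src_seq P & Xp P B y]].

Definition rmv P (B : {set 'I_k}) := remove_tgt P (natset B).

Lemma natset_pos (T : eqType) (s : seq T) (X : pred T) y : size s <= k -> y \in s ->
  natset [set i : 'I_k | val i \in [seq index y s | y <- s & X y]] (index y s) = X y.
Proof.
move=> sk ys; have lt : index y s < k by apply: leq_trans sk; rewrite index_mem.
apply/natsetP/idP => [[i]|Xy].
  rewrite inE => /mapP[y']; rewrite mem_filter => /andP[Xy' y's] -> e.
  by rewrite -(index_inj y y's ys e).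
exists (Ordinal lt) => //; rewrite inE /=; apply/mapP; exists y => //.
by rewrite mem_filter Xy ys.
Qed.

Lemma size_bounds P : iiPomk k P -> size (tgt_seq P) <= k /\ size (src_seq P) <= k.
Proof.
case=> V Dm; rewrite !size_sort -!cardE; split; apply: Dm.
- move=> x y xT _; by case: V => _ [_ [_ [_ [_ [_ [_ H]]]]]]; apply: H.
- move=> x y _ yS; by case: V => _ [_ [_ [_ [_ [_ [H _]]]]]]; apply: H.
Qed.

Lemma Xp_cap P (B : {set 'I_k}) : Xp P (B :&: [set i : 'I_k | i < size (tgt_seq P)]) =1 Xp P B.
Proof.
move=> y; rewrite /Xp natsetI; case yT: (y \in ptgt P) => //=.
by rewrite index_mem mem_tgt_seq yT andbT.
Qed.

Lemma src_rmv (a : ipomset Sigma) (B : {set 'I_k}) : iiPomk k a -> src (rmv a B) = filterpos (natset (Aset a B)) (src a).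
Proof.
move=> Ka; have [Va _] := Ka; have [_ sk] := size_bounds Ka.
rewrite /rmv src_rs // /filterpos /src size_map -map_mask.
rewrite -(@filter_pos _ _ (fun n => ~~ natset (Aset a B) n)) ?uniq_src_seq //.
congr map; apply: eq_in_filter => y ys.
by rewrite /Aset natset_pos.
Qed.

Lemma tgt_rmv (a : ipomset Sigma) (B : {set 'I_k}) : valid a -> tgt (rmv a B) = filterpos (natset B) (tgt a).
Proof. by move=> V; rewrite /rmv tgt_remove. Qed.

Lemma gm_Xp_g P Q R (f : pcar P -> pcar R) (g : pcar Q -> pcar R) (G : gm f g) (VQ : valid Q)
  (B : {set 'I_k}) y : Xp R B (g y) = Xp Q B y.
Proof.
have G' := G; case: G' => finj [ginj [cover [fg [tP [sQ [comp [labf [labg [ltiff [eviff [srcR tgtR]]]]]]]]]]].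
by rewrite /Xp tgtR (mem_imset _ _ ginj) (gm_tgt_seq G VQ) (index_map ginj).
Qed.

Lemma gm_Xp_f P Q R (f : pcar P -> pcar R) (g : pcar Q -> pcar R) (G : gm f g) (VP : valid P)
  (KQ : iiPomk k Q) (B : {set 'I_k}) x : Xp R B (f x) = Xp P (Aset Q B) x.
Proof.
have [VQ _] := KQ; have [_ sk] := size_bounds KQ.
have G' := G; case: G' => finj [ginj [cover [fg [tP [sQ [comp [labf [labg [ltiff [eviff [srcR tgtR]]]]]]]]]]].
rewrite /Xp; case xT: (x \in ptgt P) => /=.
- case: (tP x xT) => y e; have [_ yS] := fg _ _ e.
  rewrite e tgtR (mem_imset _ _ ginj) (gm_tgt_seq G VQ) (index_map ginj).
  have -> : index x (tgt_seq P) = index y (src_seq Q).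
    by rewrite -(index_map finj) (gm_mid_seq G VP VQ) e (index_map ginj).
  by rewrite /Aset natset_pos // mem_src_seq.
- apply/negbTE/negP => /andP[]; rewrite tgtR => /imsetP[y _ e].
  by have [xT' _] := fg _ _ e; rewrite xT' in xT.
Qed.

Lemma glue_remove P Q R (G : glues P Q R) (KP : iiPomk k P) (KQ : iiPomk k Q) (B : {set 'I_k}) :
  Fm (rmv R B) = ccomp (Fm (rmv P (Aset Q B))) (Fm (rmv Q B)).
Proof.
case: G => f [g G].
have [VP _] := KP; have [VQ _] := KQ.
pose kr := fun z : pcar R => ~~ Xp R B z.
have Gr := gm_rs kr G.
have e1 : rs P (fun x => kr (f x)) = rmv P (Aset Q B).
  by apply: rs_ext => x; rewrite /kr (gm_Xp_f G VP KQ).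
have e2 : rs Q (fun y => kr (g y)) = rmv Q B.
  by apply: rs_ext => y; rewrite /kr (gm_Xp_g G VQ).
have Gl : glues (rmv P (Aset Q B)) (rmv Q B) (rmv R B).
  by rewrite -e1 -e2; exists (fun x => exist _ (f (val x)) (valP x)), (fun y => exist _ (g (val y)) (valP y)).
case: HF => _ [_ [_ Hcomp]].
have V1 : valid (rmv P (Aset Q B)) by apply: valid_restrict.
have V2 : valid (rmv Q B) by apply: valid_restrict.
apply: Hcomp => //.
by case: Gl => f' [g' G1]; apply: (gm_mid G1 V1 V2).
Qed.

Lemma Aset_assoc a b r (G : glues a b r) (Ka : iiPomk k a) (Kb : iiPomk k b) (B : {set 'I_k}) :
  Aset r B = Aset a (Aset b B).
Proof.
case: G => f [g G]; have [Va _] := Ka.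
have finj : injective f by case: G.
apply/setP => i; rewrite !inE (gm_src_seq G Va) filter_map -map_comp.
rewrite (@eq_filter _ _ (Xp a (Aset b B))); last by move=> x; rewrite /= (gm_Xp_f G Va Kb).
rewrite (@eq_map _ _ _ (fun x => index x (src_seq a))) //.
by move=> x; rewrite /= (index_map finj).
Qed.

Lemma isom_Xp a b (f : pcar a -> pcar b) (I : isom f) (Va : valid a) (B : {set 'I_k}) x :
  Xp b B (f x) = Xp a B x.
Proof.
have [_ e2] := isom_seqs Va I.
have finj : injective f by case: I => bij _; apply: bij_inj.
case: I => _ [_ [_ [_ [_ ht]]]].
by rewrite /Xp ht e2 (index_map finj).
Qed.

Lemma isom_Aset a b (f : pcar a -> pcar b) (I : isom f) (Va : valid a) (B : {set 'I_k}) :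
  Aset b B = Aset a B.
Proof.
have [e1 _] := isom_seqs Va I.
have finj : injective f by case: I => bij _; apply: bij_inj.
apply/setP => i; rewrite !inE e1 filter_map -map_comp.
rewrite (@eq_filter _ _ (Xp a B)); last by move=> x; apply: (isom_Xp I Va).
rewrite (@eq_map _ _ _ (fun x => index x (src_seq a))) //.
by move=> x; rewrite /= (index_map finj).
Qed.

Lemma isom_rmv a b (f : pcar a -> pcar b) (I : isom f) (Va : valid a) (B : {set 'I_k}) :
  Fm (rmv b B) = Fm (rmv a B).
Proof.
case: HF => Hiso _; symmetry; apply: Hiso; first by apply: valid_restrict.
by apply: (isom_rs I) => x; have := isom_Xp I Va B x; rewrite /Xp => ->.
Qed.

Fixpoint allwords (n : nat) : seq (seq Sigma) :=
  if n is n'.+1 then [::] :: [seq x :: w | x <- enum Sigma, w <- allwords n']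
  else [:: [::]].

Lemma mem_allwords n w : (w \in allwords n) = (size w <= n).
Proof.
elim: n w => [|n IH] [|x w] //=.
- rewrite in_cons /= ltnS -IH; apply/allpairsP/idP => [[[y v] [_ vs e]]|ws].
  by case: e => _ ->.
  by exists (x, w); rewrite mem_enum.
Qed.

Definition W := seq_sub (allwords k).
Lemma nil_in : [::] \in allwords k. Proof. by rewrite mem_allwords. Qed.
Definition w0 : W := SeqSub nil_in.
Definition toW (w : seq Sigma) : W := insubd w0 w.
Lemma toWK w : size w <= k -> val (toW w) = w.
Proof. by move=> h; rewrite /toW insubdK // mem_allwords. Qed.
Lemma toWK' w : size w <= k -> ssval (toW w) = w.
Proof. exact: toWK. Qed.
Lemma toW_ss (v : W) : toW (ssval v) = v.
Proof. exact: valKd. Qed.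
Lemma size_W (v : W) : size (val v) <= k.
Proof. by rewrite -mem_allwords; apply: (valP v). Qed.

Definition Data := (bool * W * W * {ffun {set 'I_k} -> cmor D})%type.

Definition Inv (v : seq Sigma) (d : {ffun {set 'I_k} -> cmor D}) : bool :=
  [forall A, (d A == d (A :&: [set i : 'I_k | i < size v])) &&
             (ccod (d A) == Fo (filterpos (natset A) v))].

Definition okd (c : Data) : bool := c.1.1.1 ==> Inv (val c.1.2) c.2.

Definition Mc := {c : Data | okd c}.

Definition mk (c : Data) : Mc :=
  if insub c is Some x then x else @exist _ (fun c => okd c) (false, c.1.1.2, c.1.2, c.2) isT.

Lemma mkK c : okd c -> val (mk c) = c.
Proof. by move=> h; rewrite /mk insubT. Qed.

Lemma mk_u c : (val (mk c)).1.1.2 = c.1.1.2.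
Proof. by rewrite /mk; case: insubP => //= x _ ->. Qed.
Lemma mk_v c : (val (mk c)).1.2 = c.1.2.
Proof. by rewrite /mk; case: insubP => //= x _ ->. Qed.

Definition Fd (d : {ffun {set 'I_k} -> cmor D}) (a : ipomset Sigma) : {ffun {set 'I_k} -> cmor D} :=
  [ffun B => ccomp (d (Aset a B)) (Fm (rmv a B))].

Definition macto (m : Mc) (a : ipomset Sigma) : Mc :=
  let: (b, u, v, d) := val m in
  if b then mk (true, u, toW (tgt a), Fd d a) else mk (false, u, toW (tgt a), d).

Definition Mod : finmodule Sigma :=
  @FinModule Sigma Mc (fun m => val (val m).1.1.2) (fun m => val (val m).1.2) macto.

Definition dataP P : {ffun {set 'I_k} -> cmor D} := [ffun A => Fm (rmv P A)].
Definition cP P : Data := (true, toW (src P), toW (tgt P), dataP P).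
Definition phi P : Mc := mk (cP P).

Lemma size_tgt P : iiPomk k P -> size (tgt P) <= k.
Proof. by move=> K; rewrite size_map; case: (size_bounds K). Qed.
Lemma size_src P : iiPomk k P -> size (src P) <= k.
Proof. by move=> K; rewrite size_map; case: (size_bounds K). Qed.

Lemma Inv_dataP P : iiPomk k P -> Inv (tgt P) (dataP P).
Proof.
move=> KP; have [VP _] := KP.
apply/forallP => A; rewrite !ffunE; apply/andP; split; apply/eqP.
- congr Fm; apply: rs_ext => x /=.
  rewrite natsetI /tgt size_map; case xT: (x \in ptgt P) => //=.
  by rewrite index_mem mem_tgt_seq xT andbT.
- case: HF => _ [Hdc _]; have [_ ->] := Hdc _ (@valid_restrict _ (fun x => ~~ Xp P A x) VP).
  by rewrite tgt_rmv.
Qed.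

Lemma ok_cP P : iiPomk k P -> okd (cP P).
Proof. by move=> K; rewrite /okd /= toWK ?size_tgt //; apply: Inv_dataP. Qed.

Lemma val_phi P : iiPomk k P -> val (phi P) = cP P.
Proof. by move=> K; rewrite /phi mkK // ok_cP. Qed.

Lemma Fd_id (v : seq Sigma) d : size v <= k -> Inv v d -> Fd d (idpom v) = d.
Proof.
move=> vk /forallP Hi; apply/ffunP => B; rewrite ffunE.
have /andP[/eqP e1 /eqP e2] := Hi B.
have eA : Aset (idpom v) B = B :&: [set i : 'I_k | i < size v].
  apply/setP => i; rewrite !inE src_seq_idpom.
  apply/mapP/andP => [[y]|[iB lt]].
    rewrite mem_filter => /andP[Xy _]; rewrite index_enum_ord => e.
    move: Xy; rewrite /Xp tgt_seq_idpom index_enum_ord => /andP[_ /natsetP[j jB ej]].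
    have -> : i = j by apply: val_inj; rewrite e ej.
    by split => //; rewrite ej; apply: ltn_ord.
  exists (Ordinal lt); last by rewrite index_enum_ord.
  rewrite mem_filter mem_enum andbT /Xp in_setT tgt_seq_idpom index_enum_ord /=.
  by apply/natsetP; exists i.
have eR : Fm (rmv (idpom v) B) = cid (Fo (filterpos (natset B) v)).
  case: HF => Hiso [_ [Hid _]].
  rewrite -Hid.
  have -> : rmv (idpom v) B = rs (idpom v) (fun i : 'I_(size v) => ~~ natset B i).
    by apply: rs_ext => i; rewrite /= in_setT tgt_seq_idpom index_enum_ord.
  apply: Hiso; first by apply: valid_restrict; apply: valid_idpom.
  have -> : filterpos (natset B) v =
      mask (map (fun i : 'I_(size v) => ~~ natset B i) (enum 'I_(size v))) v.
    by rewrite /filterpos -val_enum_ord -map_comp.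
  exact: rs_idpom_iso.
rewrite eA -e1 eR -e2.
by case: HD => _ [_ [Hidr _]]; case: (Hidr (d B)).
Qed.

Lemma ccod_dom (a : ipomset Sigma) d (B : {set 'I_k}) : iiPomk k a -> Inv (src a) d ->
  ccod (d (Aset a B)) = cdom (Fm (rmv a B)).
Proof.
move=> Ka Hi; have [Va _] := Ka.
have /andP[_ /eqP ->] := forallP Hi (Aset a B).
case: HF => _ [Hdc _]; have [-> _] := Hdc _ (@valid_restrict _ (fun x => ~~ Xp a B x) Va).
by rewrite src_rmv.
Qed.

Lemma Inv_Fd (a : ipomset Sigma) d : iiPomk k a -> Inv (src a) d -> Inv (tgt a) (Fd d a).
Proof.
move=> Ka Hi; have [Va _] := Ka.
apply/forallP => B; rewrite !ffunE; apply/andP; split; apply/eqP.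
- have eX : Xp a (B :&: [set i : 'I_k | i < size (tgt a)]) =1 Xp a B.
    by rewrite /tgt size_map; apply: Xp_cap.
  congr ccomp.
    by congr (d _); apply/setP => i; rewrite !inE (eq_filter eX).
  by congr Fm; apply: rs_ext => x /=; congr negb; apply: (esym (eX x)).
- have Hcc := ccod_dom B Ka Hi.
  case: HD => _ [Hc _]; have [_ ->] := Hc _ _ Hcc.
  case: HF => _ [Hdc _]; have [_ ->] := Hdc _ (@valid_restrict _ (fun x => ~~ Xp a B x) Va).
  by rewrite tgt_rmv.
Qed.

Lemma Fd_assoc a b r d : iiPomk k a -> iiPomk k b -> glues a b r -> Inv (src a) d ->
  Fd (Fd d a) b = Fd d r.
Proof.
move=> Ka Kb G Hi; have [Va _] := Ka; have [Vb _] := Kb.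
apply/ffunP => B; rewrite !ffunE.
rewrite (Aset_assoc G Ka Kb) (glue_remove G Ka Kb).
case: HD => _ [_ [_ Hassoc]]; apply: Hassoc; first exact: ccod_dom.
case: HF => _ [Hdc _].
have [_ ->] := Hdc _ (@valid_restrict _ (fun x => ~~ Xp a (Aset b B) x) Va).
have [-> _] := Hdc _ (@valid_restrict _ (fun x => ~~ Xp b B x) Vb).
rewrite tgt_rmv // src_rmv //.
by case: G => f [g G]; rewrite (gm_mid G Va Vb).
Qed.

Definition Cset (A : pred nat) (B : {set 'I_k}) : {set 'I_k} :=
  [set i : 'I_k | A i || natset B (count (fun j => ~~ A j) (iota 0 i))].

Lemma natset_set (p : pred nat) n : n < k -> natset [set i : 'I_k | p i] n = p n.
Proof.
move=> lt; apply/natsetP/idP => [[i]|pn]; first by rewrite inE => pi <-.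
by exists (Ordinal lt); rewrite ?inE.
Qed.

Lemma natset_Cset (A : pred nat) B n : n < k ->
  natset (Cset A B) n = A n || natset B (count (fun j => ~~ A j) (iota 0 n)).
Proof. by move=> lt; rewrite /Cset (@natset_set (fun i => A i || natset B (count (fun j => ~~ A j) (iota 0 i)))). Qed.

Lemma coh_rmv P (A : pred nat) (B : {set 'I_k}) : iiPomk k P ->
  Fm (rmv (remove_tgt P A) B) = Fm (rmv P (Cset A B)).
Proof.
move=> KP; have [VP _] := KP; have [tk _] := size_bounds KP.
case: HF => Hiso _.
pose k1 := fun x : pcar P => ~~ ((x \in ptgt P) && A (index x (tgt_seq P))).
pose k2 := fun z : pcar (rs P k1) =>
  ~~ ((z \in ptgt (rs P k1)) && natset B (index z (tgt_seq (rs P k1)))).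
pose k3 := fun x : pcar P => ~~ ((x \in ptgt P) && natset (Cset A B) (index x (tgt_seq P))).
apply: Hiso; first by do 2! apply: valid_restrict.
apply: (@rs_rs_iso P k1 k2 k3).
- move=> x h; rewrite /k2 /k3 inE /=.
  case xT: (x \in ptgt P) => //=; congr negb.
  have xs : x \in tgt_seq P by rewrite mem_tgt_seq.
  have nlt : index x (tgt_seq P) < size (tgt_seq P) by rewrite index_mem.
  have hA : ~~ A (index x (tgt_seq P)) by move: h; rewrite /k1 xT.
  rewrite natset_Cset; last by apply: leq_trans tk.
  rewrite (negbTE hA) /=; congr (natset B).
  rewrite -(index_map val_inj) (tgt_seq_rs k1 VP) /= (index_filter_count xs h).
  rewrite (@eq_in_count _ _ (fun y => ~~ A (index y (tgt_seq P)))); last first.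
    by move=> y /mem_take; rewrite mem_tgt_seq /k1 => ->.
  by rewrite (@count_take_pos _ _ (fun n => ~~ A n)) ?uniq_tgt_seq // ltnW.
- move=> x; rewrite /k3 /k1; apply: contra => /andP[xT Ax].
  rewrite xT natset_Cset ?Ax //.
  by apply: leq_trans tk; rewrite index_mem mem_tgt_seq.
Qed.

Lemma Mod_is_module : is_module k Mod.
Proof.
split; [|split; [|split]].
- move=> [[[[bf u] v] d] okm] a b Ka /= ev [f I]; have [Va _] := Ka.
  have [_ et] := isom_words Va I.
  rewrite /macto /= et; case: bf okm => okm //.
  congr mk; congr (_, _); apply/ffunP => B.
  by rewrite !ffunE (isom_Aset I Va) (isom_rmv I Va).
- move=> [[[[bf u] v] d] okm] a Ka /= ev; rewrite /macto /=.
  by case: bf okm => okm; rewrite mk_u mk_v /= ?toWK ?toWK' ?size_tgt.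
- move=> [[[[bf u] v] d] okm] /=; rewrite /macto /= tgt_idpom toW_ss; apply: val_inj.
  case: bf okm => okm; last by rewrite mkK.
  by rewrite Fd_id ?size_W // mkK.
- move=> [[[[bf u] v] d] okm] a b r Ka Kb /= ev eab G.
  have [Va _] := Ka; have [Vb _] := Kb.
  have etr : tgt r = tgt b by case: G => f [g G']; apply: (gm_tgt G' Vb).
  case: bf okm => okm.
  + have Hi : Inv (src a) d by rewrite -ev.
    have E1 : val (macto (exist _ (true, u, v, d) okm) a) = (true, u, toW (tgt a), Fd d a).
      rewrite /macto /= mkK // /okd /= ?toWK' ?toWK ?size_tgt //; exact: Inv_Fd.
    rewrite {1}/macto E1 /macto /=.
    by rewrite etr (Fd_assoc Ka Kb G Hi).
  + have E1 : val (macto (exist _ (false, u, v, d) okm) a) = (false, u, toW (tgt a), d).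
      by rewrite /macto /= mkK.
    rewrite {1}/macto E1 /macto /=.
    by rewrite etr.
Qed.

Lemma phi_hom : is_module_hom k Mod phi.
Proof.
split; [|split].
- move=> P Q KP [f I]; have [VP _] := KP.
  have [es et] := isom_words VP I.
  rewrite /phi /cP es et; congr mk; congr (_, _); apply/ffunP => A.
  by rewrite !ffunE (isom_rmv I VP).
- move=> P KP /=; by rewrite mk_u mk_v /= ?toWK ?toWK' ?size_src ?size_tgt.
- move=> P a R KP Ka eqa G /=.
  rewrite /macto (val_phi KP) /= /phi /cP.
  have [VP _] := KP; have [Va _] := Ka.
  case: (G) => f [g G'].
  rewrite (gm_src G' VP) (gm_tgt G' Va).
  congr mk; congr (_, _); apply/ffunP => B; rewrite !ffunE.
  exact: (glue_remove G KP Ka B).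
Qed.

Lemma dataP_set0 P : valid P -> dataP P set0 = Fm P.
Proof.
move=> VP; rewrite ffunE.
case: HF => Hiso _; apply: Hiso; first by apply: valid_restrict.
by apply: rs_all_iso => x; rewrite natset0 andbF.
Qed.

Lemma phi_coh P Q : iiPomk k P -> iiPomk k Q -> psrc P = set0 -> psrc Q = set0 ->
  tgt P = tgt Q -> phi P = phi Q ->
  forall A : pred nat, phi (remove_tgt P A) = phi (remove_tgt Q A).
Proof.
move=> KP KQ sP sQ et e A.
have [VP _] := KP; have [VQ _] := KQ.
have ed : dataP P = dataP Q.
  by move/(congr1 val): e; rewrite !val_phi // => /(congr1 snd).
rewrite /phi /cP (tgt_remove A VP) (tgt_remove A VQ) et.
have -> : src (remove_tgt P A) = [::] by rewrite src_rs // /src_seq sP enum_set0.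
have -> : src (remove_tgt Q A) = [::] by rewrite src_rs // /src_seq sQ enum_set0.
congr mk; congr (_, _); apply/ffunP => B; rewrite !ffunE !coh_rmv //.
by have := congr1 (fun d : {ffun {set 'I_k} -> cmor D} => d (Cset A B)) ed; rewrite /= /dataP !ffunE.
Qed.

End Main.
End Gen.

Unset Implicit Arguments.

Theorem mainTheorem6 (Sigma : finType) (k : nat) (L : ipomset Sigma -> Prop) :
  (forall P, L P -> iiPomk k P /\ psrc P = set0) ->
  recognizable L ->
  exists (M : finmodule Sigma) (J : pred (mcar M)) (phi : ipomset Sigma -> mcar M),
    is_module k M /\ is_module_hom k M phi /\
    (forall P, iiPomk k P -> (L P <-> phi P \in J)) /\
    (forall P Q, iiPomk k P -> iiPomk k Q -> psrc P = set0 -> psrc Q = set0 ->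
       tgt P = tgt Q -> phi P = phi Q ->
       forall A : pred nat, phi (remove_tgt P A) = phi (remove_tgt Q A)).
Proof.
move=> _ [D [K [Fo [Fm [HD [HF HR]]]]]].
exists (Mod k Fo Fm), (fun m : Mc k Fo => (val m).2 set0 \in K), (phi k Fo Fm).
split; first exact: (@Mod_is_module Sigma k D Fo Fm HD HF).
split; first exact: (@phi_hom Sigma k D Fo Fm HF).
split.
- move=> P KP; have [VP _] := KP.
  rewrite unfold_in /= (val_phi HF KP) /= (dataP_set0 k HF VP).
  exact: HR.
- move=> P Q KP KQ sP sQ et e A; exact: (phi_coh HF KP KQ sP sQ et e A).
Qed.
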